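(* Let $q$ be a prime power, $n\ge 1$, and let $\ell$ be an integer with $1\le \ell\le n(q-1)$ and $\ell\equiv 0\pmod{q-1}$. Then the all-ones vector $\mathbf{1}=(1,\dots,1)\in\mathbb{F}_q^N$ does not lie in $C_{n,\ell}^q$. In particular, $C_{n,n(q-1)}^q$ is an LCD code, i.e. $C_{n,n(q-1)}^q\cap (C_{n,n(q-1)}^q)^\perp=\{0\}$.
   Context: For a prime power $q$ and integers $n\ge 1$, $k\ge 0$, the projective Reed-Muller code $C_{n,k}^q\subseteq \mathbb{F}_q^N$, $N=\frac{q^{n+1}-1}{q-1}$, is defined as follows. For each point of $\mathbb{P}^n(\mathbb{F}_q)$ choose the affine representative $(p_0,\dots,p_n)\in\mathbb{F}_q^{n+1}\setminus\{0\}$ whose left-most nonzero coordinate equals $1$, and fix an ordering $P_1',\dots,P_N'$ of these representatives. Then $C_{n,k}^q=\{(F(P_1'),\dots,F(P_N')) : F\in \mathbb{F}_q[x_0,\dots,x_n]_k\}$, where $\mathbb{F}_q[x_0,\dots,x_n]_k$ is the space of homogeneous polynomials of degree $k$ together with $0$. For $C\subseteq\mathbb{F}_q^N$ linear, $C^\perp=\{y:\sum_i y_ic_i=0\ \forall c\in C\}$ (standard dot product), and $\operatorname{Hull}(C)=C\cap C^\perp$. $C$ is LCD if $\operatorname{Hull}(C)=\{0\}$. *)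

(* Defs.v *)
From HB Require Import structures.
From mathcomp Require Import all_boot all_algebra all_field.
From mathcomp Require Import mpoly.
Set Implicit Arguments. Unset Strict Implicit. Unset Printing Implicit Defensive.
Import GRing.Theory.
Local Open Scope ring_scope.

(* The normalized affine representative of a projective point of P^n(F):
   a vector of F^(n+1) whose left-most nonzero coordinate equals 1. *)
Definition normalized (F : fieldType) (n : nat) (v : {ffun 'I_n.+1 -> F}) : bool :=
  [exists i : 'I_n.+1, (v i == 1) && [forall j : 'I_n.+1, (j < i)%N ==> (v j == 0)]].

(* The finite index set of the code: the normalized representatives P'_1..P'_N. *)
Definition proj_pts (F : finFieldType) (n : nat) : finType :=
  {v : {ffun 'I_n.+1 -> F} | normalized v}.

(* Words of F_q^N, indexed by the points (the ordering is irrelevant). *)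
Definition word (F : finFieldType) (n : nat) : Type := {ffun proj_pts F n -> F}.

Definition evalvec (F : finFieldType) (n : nat) (p : {mpoly F[n.+1]}) : word F n :=
  [ffun P : proj_pts F n => p.@[fun i => (val P) i]].

(* Projective Reed-Muller code C_{n,k}^q: evaluations of homogeneous
   polynomials of degree k (together with 0, which is k.-homog). *)
Definition PRM (F : finFieldType) (n k : nat) (c : word F n) : Prop :=
  exists p : {mpoly F[n.+1]}, p \is k.-homog /\ c = evalvec p.

Definition dotw (F : finFieldType) (n : nat) (x y : word F n) : F :=
  \sum_(P : proj_pts F n) x P * y P.

Definition dual (F : finFieldType) (n : nat) (C : word F n -> Prop) (y : word F n) : Prop :=
  forall c, C c -> dotw y c = 0.

Definition is_LCD (F : finFieldType) (n : nat) (C : word F n -> Prop) : Prop :=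
  forall c : word F n, C c -> dual C c -> c = 0.

Definition ones (F : finFieldType) (n : nat) : word F n := [ffun => 1].

(* Main.v *)
Require Import Defs.
From HB Require Import structures.
From mathcomp Require Import all_boot all_algebra all_field all_fingroup all_solvable.
From mathcomp Require Import mpoly.
From mathcomp Require Import ring.
Set Implicit Arguments. Unset Strict Implicit. Unset Printing Implicit Defensive.
Import GRing.Theory FinRing.Theory.
Local Open Scope ring_scope.

Section FF.
Variable F : finFieldType.
Local Notation q := #|F|.

Lemma cardF_eq0 : (q%:R : F) = 0.
Proof.
pose e := exponent [set: F].
have he: e%:R == 0 :> F by rewrite -zmodXgE expg_exponent // inE.
have /dvdnP [k hk] := exponent_dvdn [set: F].
by rewrite cardsT in hk; rewrite hk natrM (eqP he) mulr0.
Qed.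

Lemma q_gt1 : (1 < q)%N.
Proof. exact: finNzRing_gt1. Qed.

Lemma expq1 (x : F) : x != 0 -> x ^+ (q - 1) = 1.
Proof.
move=> nx; have := expf_card x.
rewrite -{1}(subnK (ltnW q_gt1)) addn1.
rewrite exprS => h; apply: (mulfI nx); by rewrite mulr1.
Qed.

Lemma expq0 (x : F) : x ^+ (q - 1) = (x != 0)%:R.
Proof.
have [->|nx] := eqVneq x 0; last by rewrite expq1.
by rewrite expr0n /= subn_eq0 leqNgt q_gt1.
Qed.

Lemma powsum0 (a : nat) : (a < q - 1)%N -> \sum_(x : F) x ^+ a = 0.
Proof.
case: a => [_|a ha].
  rewrite (eq_bigr (fun _ => 1)) // sumr_const cardT -cardE; exact: cardF_eq0.
have [/existsP [c /andP [nc hc]] | hall] := boolP [exists c : F, (c != 0) && (c ^+ a.+1 != 1)]; last first.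
  exfalso.
  pose rs := enum (predC1 (0 : F)).
  have hp : ('X^(a.+1) - 1 : {poly F}) != 0.
    by rewrite -size_poly_eq0 size_XnsubC.
  have := max_poly_roots hp.
  rewrite size_XnsubC // => /(_ rs).
  have -> : all (root ('X^(a.+1) - 1)) rs.
    apply/allP => x; rewrite mem_enum inE => nx.
    rewrite rootE !hornerE subr_eq0.
    apply/negPn/negP => h; move/negP: hall; apply; apply/existsP; exists x; by rewrite nx.
  rewrite enum_uniq => /(_ isT isT).
  rewrite -cardE cardC1 -subn1 ltnS leqNgt.
  by rewrite ha.
have e : \sum_(x : F) x ^+ a.+1 = \sum_(x : F) (c * x) ^+ a.+1.
  by rewrite (reindex_inj (mulfI nc)).
move: e; under [X in _ = X]eq_bigr do rewrite exprMn.
rewrite -mulr_sumr => /eqP; rewrite -subr_eq0 -{1}(mul1r (\sum_x _)) -mulrBl mulf_eq0.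
by rewrite subr_eq0 eq_sym (negbTE hc) => /eqP.
Qed.



Variable n : nat.

Lemma monsum0 (m : 'X_{1..n.+1}) : (mdeg m < n.+1 * (q - 1))%N ->
  \sum_(x : {ffun 'I_n.+1 -> F}) \prod_(i < n.+1) x i ^+ m i = 0.
Proof.
move=> hm.
rewrite -(bigA_distr_bigA (fun i (y : F) => y ^+ m i)) /=.
have [/existsP [i hi] | hall] := boolP [exists i : 'I_n.+1, (m i < q - 1)%N].
  by rewrite (bigD1 i) //= powsum0 // mul0r.
exfalso; move: hm; rewrite mdegE ltnNge => /negP; apply.
have -> : (n.+1 * (q - 1) = \sum_(i < n.+1) (q - 1))%N by rewrite sum_nat_const card_ord.
apply: leq_sum => i _; rewrite leqNgt; apply/negP => h.
by move/negP: hall; apply; apply/existsP; exists i.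
Qed.

Lemma polysum0 (p : {mpoly F[n.+1]}) l : p \is l.-homog -> (l < n.+1 * (q - 1))%N ->
  \sum_(x : {ffun 'I_n.+1 -> F}) p.@[fun i => x i] = 0.
Proof.
move=> /dhomogP hp hl.
under eq_bigr do rewrite mevalE.
rewrite exchange_big /= big1_seq // => m /andP [_ hm].
by rewrite -mulr_sumr monsum0 ?mulr0 // hp.
Qed.

Lemma polyat0 (p : {mpoly F[n.+1]}) l : p \is l.-homog -> (1 <= l)%N ->
  p.@[fun _ => 0] = 0.
Proof.
move=> /dhomogP hp hl; rewrite mevalE big1_seq // => m /andP [_ hm].
have : (0 < mdeg m)%N by rewrite hp.
have [/existsP [i hi] | hall] := boolP [exists i : 'I_n.+1, (0 < m i)%N].
  rewrite (bigD1 i) //= expr0n; move: hi; rewrite lt0n => /negbTE ->; by rewrite mul0r mulr0.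
rewrite mdegE big1 // => i _; apply/eqP; rewrite -leqn0 leqNgt; apply/negP => h.
by move/negP: hall; apply; apply/existsP; exists i.
Qed.

Lemma polyscale (p : {mpoly F[n.+1]}) l (c : F) (x : 'I_n.+1 -> F) : p \is l.-homog ->
  p.@[fun i => c * x i] = c ^+ l * p.@[x].
Proof.
move=> /dhomogP hp; rewrite !mevalE mulr_sumr; apply: eq_big_seq => m hm.
rewrite mulrCA; congr (_ * _).
under eq_bigr do rewrite exprMn.
by rewrite big_split /= prodrXr -mdegE hp.
Qed.

Lemma normalize (x : {ffun 'I_n.+1 -> F}) (i : 'I_n.+1) : x i != 0 ->
  exists (P : proj_pts F n) (c : F), c != 0 /\ forall j, x j = c * val P j.
Proof.
move=> hi.
case: (@arg_minnP _ _ (fun j : 'I_n.+1 => x j != 0) (fun j : 'I_n.+1 => nat_of_ord j) hi) => k hk hmin.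
pose v := [ffun j => (x k)^-1 * x j].
have nv : normalized v.
  apply/existsP; exists k; rewrite ffunE mulVf // eqxx /=.
  apply/forallP => j; apply/implyP => hjk.
  rewrite ffunE; have : x j == 0.
    apply/negPn/negP => hj; have := hmin j hj; by rewrite leqNgt hjk.
  by move/eqP ->; rewrite mulr0.
exists (exist _ v nv), (x k); split => // j /=.
by rewrite ffunE mulrA mulfV // mul1r.
Qed.

Lemma part1 l : (1 <= l)%N -> (l <= n * (q - 1))%N -> (q - 1 %| l)%N ->
  ~ PRM l (ones F n).
Proof.
move=> l1 ln ld [p [hp he]].
have hv : forall P : proj_pts F n, p.@[fun i => val P i] = 1.
  by move=> P; have := congr1 (fun w : word F n => w P) he; rewrite /evalvec !ffunE.
have hx : forall x : {ffun 'I_n.+1 -> F}, p.@[fun i => x i] = (x != 0)%:R.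
  move=> x; have [->|nx] := eqVneq x 0.
    rewrite (@meval_eq _ _ _ (fun _ => 0)); last by move=> i; rewrite ffunE.
    by rewrite (polyat0 hp).
  have [/existsP [i hi] | /existsPn h] := boolP [exists i, x i != 0]; last first.
    move/eqP: nx => nx; exfalso; apply: nx.
    by apply/ffunP => i; rewrite ffunE; apply/eqP; have := h i; rewrite negbK.
  have [P [c [nc hc]]] := normalize hi.
  rewrite (@meval_eq _ _ _ (fun i => c * val P i)) //.
  rewrite (polyscale _ _ hp) hv mulr1 /=.
  case/dvdnP: ld => k ->; by rewrite mulnC exprM expq1 // expr1n.
have hlt : (l < n.+1 * (q - 1))%N.
  by apply: (leq_ltn_trans ln); rewrite ltn_mul2r subn_gt0 q_gt1 ltnSn.
have := polysum0 hp hlt.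
have -> : \sum_(x : {ffun 'I_n.+1 -> F}) p.@[fun i => x i] = - 1.
  have e : forall x : {ffun 'I_n.+1 -> F}, (x != 0)%:R = 1 - (x == 0)%:R :> F.
    by move=> x; case: (x == 0); rewrite ?subr0 ?subrr.
  under eq_bigr do rewrite hx e.
  rewrite sumrB sumr_const (bigD1 (0 : {ffun 'I_n.+1 -> F})) //= eqxx big1 => [|x /negbTE -> //].
  rewrite addr0 card_ffun card_ord.
  by rewrite natrX cardF_eq0 expr0n sub0r.
by move/eqP; rewrite oppr_eq0 oner_eq0.
Qed.


Lemma norm_uniq (P Q : proj_pts F n) (c : F) :
  (forall j, val Q j = c * val P j) -> Q = P.
Proof.
case: P => P hP; case: Q => Q hQ /= h.
have /existsP [kp /andP [/eqP hp1 /forallP hp0]] := hP.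
have /existsP [kq /andP [/eqP hq1 /forallP hq0]] := hQ.
have [hlt|hlt|heq] := ltngtP kq kp.
- have := h kq; rewrite hq1 (eqP (implyP (hp0 kq) hlt)) mulr0 => /eqP.
  by rewrite oner_eq0.
- have := h kp; rewrite hp1 mulr1 (eqP (implyP (hq0 kp) hlt)) => hc.
  have := h kq; rewrite hq1 -hc mul0r => /eqP; by rewrite oner_eq0.
- have ek : kq = kp by apply: val_inj.
  have := h kq; rewrite hq1 ek hp1 mulr1 => hc.
  apply: val_inj => /=; apply/ffunP => j; by rewrite h -hc mul1r.
Qed.

Definition gpoly (P : proj_pts F n) (i : 'I_n.+1) : {mpoly F[n.+1]} :=
  \prod_(j <- enum (predC1 i))
     ('X_i ^+ (q - 1) - (val P i *: 'X_j - val P j *: 'X_i) ^+ (q - 1)).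

Definition Hf (i : 'I_n.+1) (Q : proj_pts F n) : F :=
  \prod_(j <- enum (predC1 i)) (- (val Q j) ^+ (q - 1)).

Lemma prod_homog (I : Type) (r : seq I) (f : I -> {mpoly F[n.+1]}) d :
  (forall j, f j \is d.-homog) -> \prod_(j <- r) f j \is (size r * d).-homog.
Proof.
move=> hf; elim: r => [|a r ih]; first by rewrite big_nil mul0n dhomog1.
by rewrite big_cons /= mulSn; apply: dhomogM.
Qed.

Lemma gpoly_homog (P : proj_pts F n) (i : 'I_n.+1) : gpoly P i \is (n * (q - 1)).-homog.
Proof.
have -> : (n * (q - 1) = size (enum (predC1 i)) * (q - 1))%N by rewrite -cardE cardC1 card_ord.
apply: prod_homog => j.
have hX : forall k : 'I_n.+1, ('X_k : {mpoly F[n.+1]}) \is 1.-homog.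
  move=> k; rewrite dhomogX; apply/eqP; exact: mdeg1.
apply: rpredB.
  by have := dhomogMn (q - 1) (hX i); rewrite mul1n.
have h1 : (val P i *: 'X_j - val P j *: 'X_i : {mpoly F[n.+1]}) \is 1.-homog.
  by apply: rpredB; apply: dhomogZ.
by have := dhomogMn (q - 1) h1; rewrite mul1n.
Qed.

Lemma meval_prodr (v : 'I_n.+1 -> F) (r : seq 'I_n.+1) (f : 'I_n.+1 -> {mpoly F[n.+1]}) :
  (\prod_(j <- r) f j).@[v] = \prod_(j <- r) (f j).@[v].
Proof.
elim: r => [|a r ih]; first by rewrite !big_nil meval1.
by rewrite !big_cons mevalM ih.
Qed.

Lemma mevalXn (v : 'I_n.+1 -> F) (p : {mpoly F[n.+1]}) k : (p ^+ k).@[v] = p.@[v] ^+ k.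
Proof.
elim: k => [|k ih]; first by rewrite !expr0 meval1.
by rewrite !exprS mevalM ih.
Qed.

Lemma gpoly_eval (P : proj_pts F n) (i : 'I_n.+1) (Q : proj_pts F n) : val P i != 0 ->
  (evalvec (gpoly P i)) Q = if val Q i == 0 then Hf i Q else (Q == P)%:R.
Proof.
move=> hPi; rewrite /evalvec ffunE /gpoly meval_prodr.
under eq_bigr do rewrite mevalB !mevalXn mevalB !mevalZ !mevalXU.
have [hQi|hQi] := eqVneq (val Q i) 0.
  rewrite /Hf; apply: eq_bigr => j _.
  by rewrite hQi expr0n /= subn_eq0 leqNgt q_gt1 /= mulr0 subr0 exprMn expq1 // mul1r sub0r.
under eq_bigr do rewrite expq1 // expq0.
have [->|hne] := eqVneq Q P.
  by rewrite big1_seq // => j _; rewrite (mulrC (\val P i)) subrr eqxx subr0.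
have [j hj hd] : exists2 j, j \in enum (predC1 i) & val P i * val Q j - val P j * val Q i != 0.
  have [/existsP [j /andP [hj1 hj2]] | /existsPn hall] :=
    boolP [exists j, (j != i) && (val P i * val Q j - val P j * val Q i != 0)].
    by exists j => //; rewrite mem_enum.
  exfalso; move/eqP: hne; apply; apply: (@norm_uniq _ _ (val Q i / val P i)) => j.
  have [->|hji] := eqVneq j i; first by rewrite divfK.
  have := hall j; rewrite hji /= negbK subr_eq0 => /eqP hd.
  apply: (mulfI hPi); rewrite hd; field; done.
rewrite (bigD1_seq j) ?enum_uniq //= hd subrr mul0r //.
Qed.
End FF.

Local Close Scope ring_scope.

Theorem mainTheorem3 (F : finFieldType) (n l : nat) :
  (1 <= n)%N ->
  (1 <= l)%N -> (l <= n * (#|F| - 1))%N -> (#|F| - 1 %| l)%N ->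
  ~ PRM l (ones F n) /\ is_LCD (@PRM F n (n * (#|F| - 1))).
Proof.
Local Open Scope ring_scope.
move=> n1 l1 ln ld; split; first exact: part1.
move=> c [p [hp hc]] hdual.
pose P0v := [ffun _ : 'I_n.+1 => (1 : F)].
have nP0 : normalized P0v.
  apply/existsP; exists ord0; rewrite ffunE eqxx /=.
  by apply/forallP.
pose P0 : proj_pts F n := exist _ P0v nP0.
have key : forall (R : proj_pts F n) i, val R i != 0 ->
    c R = - \sum_(Q : proj_pts F n) (if val Q i == 0 then c Q * Hf i Q else 0).
  move=> R i hRi.
  have := hdual _ (ex_intro _ (gpoly R i) (conj (gpoly_homog R i) erefl)).
  rewrite /dotw.
  under eq_bigr do rewrite gpoly_eval //.
  have e : forall Q : proj_pts F n,
      c Q * (if val Q i == 0 then Hf i Q else (Q == R)%:R) =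
      (if val Q i == 0 then c Q * Hf i Q else 0) + c Q * (Q == R)%:R.
    move=> Q; have [hQ|hQ] := eqVneq (val Q i) 0.
      have : Q != R by apply/eqP => eQR; move: hRi; rewrite -eQR hQ eqxx.
      by move/negbTE ->; rewrite mulr0 addr0.
    by rewrite add0r.
  under eq_bigr do rewrite e.
  rewrite big_split /= [X in _ + X](bigD1 R) //= eqxx mulr1.
  rewrite [X in c R + X]big1; last by move=> Q /negbTE ->; rewrite mulr0.
  by rewrite addr0 addrC => /eqP; rewrite addr_eq0 => /eqP.
have hall : forall R : proj_pts F n, c R = c P0.
  move=> R; have /existsP [i /andP [/eqP hi _]] := valP R.
  rewrite (key R i) ?hi ?oner_eq0 // (key P0 i) //= ffunE oner_eq0 //.
have [a0|an0] := eqVneq (c P0) 0.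
  by apply/ffunP => Q; rewrite ffunE hall a0.
exfalso; apply: (@part1 F n (n * (#|F| - 1))) => //.
- by rewrite muln_gt0 n1 subn_gt0 q_gt1.
- exact: dvdn_mull.
exists ((c P0)^-1 *: p); split; first exact: dhomogZ.
apply/ffunP => Q; rewrite !ffunE mevalZ.
have := congr1 (fun w : word F n => w Q) hc; rewrite /evalvec ffunE => <-.
by rewrite hall mulVf.
Qed.
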